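(* Let $\Bbbk$ be a field of characteristic zero. For $n\in\mathbb Z$ let $\mathcal F_n\mathcal O=\mathrm{span}\{\mathcal U_k\mid k\ge n,\ k\ge-1\}$ and $\mathcal F_n\mathcal P=\mathrm{span}\{\mathcal V_k\mid k\ge n,\ k\ge -1\}$. Then $[\mathcal F_n\mathcal O,\mathcal F_m\mathcal P]\subseteq\mathcal F_{n+m}\mathcal P$ for all $n,m\in\mathbb Z$. Consequently, setting $\mathcal F_n\mathfrak b=\mathcal F_n\mathcal O\ltimes\mathcal F_n\mathcal P=\mathrm{span}\{\mathcal U_k,\mathcal V_k\mid k\ge n,\ k\ge-1\}$, one has $[\mathcal F_n\mathfrak b,\mathcal F_m\mathfrak b]\subseteq\mathcal F_{n+m}\mathfrak b$ for all $n,m$, and $\mathfrak b=\mathcal F_{-1}\mathfrak b\supseteq\mathcal F_0\mathfrak b\supseteq\mathcal F_1\mathfrak b\supseteq\cdots$, so $\mathcal F$ is a filtration of $\mathfrak b$.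
   Context: The centreless BCCA $\mathfrak b=\mathcal O\ltimes\mathcal P$ has a basis $\{u_n,v_m\mid n\ge1,m\ge0\}$ with $[u_n,u_m]=(n-m)(u_{n+m}-4u_{n+m-2})$, $[u_n,v_m]=(n-m)v_{n+m}-4(n-m-1)v_{n+m-2}$, $[v_n,v_m]=0$, where $\mathcal O=\mathrm{span}\{u_n\}$ and $\mathcal P=\mathrm{span}\{v_m\}$. Set $\mathcal U_n=u_{n+2}$ and $\mathcal V_n=v_{n+1}$ for $n\ge-1$. *)

(* Defs.v *)
From mathcomp Require Import all_boot all_order all_algebra.
Set Implicit Arguments. Unset Strict Implicit. Unset Printing Implicit Defensive.
Import Order.TTheory GRing.Theory Num.Theory.
Local Open Scope ring_scope.

(* Concrete model of the centreless BCCA  b = O ⋉ P  over a field K.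
   An element of b is a pair (p, q) of polynomials:
     p = \sum_i p_i 'X^i  encodes  \sum_i p_i u_(i+1)   (basis u_n, n >= 1),
     q = \sum_i q_i 'X^i  encodes  \sum_i q_i v_i       (basis v_m, m >= 0).
   Hence the coefficient of U_k = u_(k+2) is p`_(k+1) and the coefficient
   of V_k = v_(k+1) is q`_(k+1), for k >= -1. *)
Definition bcca (K : fieldType) := ({poly K} * {poly K})%type.

Section BCCA.
Variable K : fieldType.

Definition bu (n : nat) : bcca K := ('X^(n.-1), 0).
Definition bv (m : nat) : bcca K := (0, 'X^m).

Definition zdiff (n m : nat) : K := ((n%:Z - m%:Z)%R)%:~R.

Definition brUU (n m : nat) : bcca K :=
  zdiff n m *: (bu (n + m) - 4 *: bu (n + m - 2)).

(* [u_n, v_m] = (n-m) v_(n+m) - 4 (n-m-1) v_(n+m-2)   (n >= 1, m >= 0);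
   when n + m - 2 < 0 (i.e. n = 1, m = 0) the coefficient n-m-1 is 0. *)
Definition brUV (n m : nat) : bcca K :=
  zdiff n m *: bv (n + m) - (4 * (zdiff n m - 1)) *: bv (n + m - 2).

(* bilinear extension; [v_n, v_m] = 0, [v_m, u_n] = - [u_n, v_m] *)
Definition lie (x y : bcca K) : bcca K :=
  \sum_(i < size x.1) \sum_(j < size y.1)
      (x.1`_i * y.1`_j) *: brUU i.+1 j.+1
  + \sum_(i < size x.1) \sum_(j < size y.2)
      (x.1`_i * y.2`_j) *: brUV i.+1 j
  - \sum_(i < size x.2) \sum_(j < size y.1)
      (x.2`_i * y.1`_j) *: brUV j.+1 i.

(* coefficient of U_k / V_k is the polynomial coefficient of index k+1;
   "p lies in span{ basis_k | k >= n, k >= -1 }" means all coefficients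
   of basis_k with k < n vanish. *)
Definition filt_poly (n : int) (p : {poly K}) : Prop :=
  forall i : nat, (i%:Z - 1 < n)%R -> p`_i = 0.

Definition FO (n : int) (x : bcca K) : Prop := filt_poly n x.1 /\ x.2 = 0.
Definition FP (n : int) (x : bcca K) : Prop := x.1 = 0 /\ filt_poly n x.2.
Definition Fb (n : int) (x : bcca K) : Prop := filt_poly n x.1 /\ filt_poly n x.2.

End BCCA.

(* Main.v *)
Require Import Defs.
From mathcomp Require Import all_boot all_order all_algebra zify.
Import Order.TTheory GRing.Theory Num.Theory.
Local Open Scope ring_scope.

Section S.
Variable K : fieldType.
Implicit Types (p q : {poly K}) (n m : int).

Lemma filt0 n : filt_poly n (0 : {poly K}).
Proof. by move=> i _; rewrite coef0. Qed.
Lemma filtD n p q : filt_poly n p -> filt_poly n q -> filt_poly n (p + q).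
Proof. by move=> hp hq i hi; rewrite coefD hp ?hq ?addr0. Qed.
Lemma filtN n p : filt_poly n p -> filt_poly n (- p).
Proof. by move=> hp i hi; rewrite coefN hp ?oppr0. Qed.
Lemma filtZ n c p : filt_poly n p -> filt_poly n (c *: p).
Proof. by move=> hp i hi; rewrite coefZ hp ?mulr0. Qed.
Lemma filtX n k : n <= k%:Z - 1 -> filt_poly n ('X^k : {poly K}).
Proof.
move=> hk i hi; rewrite coefXn; case: eqP => // ei; subst i.
exfalso; lia.
Qed.
Lemma filt_mono n m p : n <= m -> filt_poly m p -> filt_poly n p.
Proof. move=> hnm hp i hi; apply: hp; lia. Qed.

Lemma pairE (c : K) (z : bcca K) : c *: z = (c *: z.1, c *: z.2).
Proof. by case: z. Qed.

Lemma Fb0 n : Fb n (0 : bcca K).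
Proof. split; exact: filt0. Qed.
Lemma FbD n (a b : bcca K) : Fb n a -> Fb n b -> Fb n (a + b).
Proof. by case=> ??[??]; split; apply: filtD. Qed.
Lemma FbN n (a : bcca K) : Fb n a -> Fb n (- a).
Proof. by case=> ??; split; apply: filtN. Qed.
Lemma FbZ n c (a : bcca K) : Fb n a -> Fb n (c *: a).
Proof. by case=> ??; split; apply: filtZ. Qed.
Lemma Fb_sum n k (F : 'I_k -> bcca K) : (forall i, Fb n (F i)) -> Fb n (\sum_(i < k) F i).
Proof. move=> h; apply: big_ind => //; [exact: Fb0 | exact: FbD]. Qed.

Definition Z1 (z : bcca K) := z.1 = 0.
Lemma Z1_sum k (F : 'I_k -> bcca K) : (forall i, Z1 (F i)) -> Z1 (\sum_(i < k) F i).
Proof. move=> h; apply: big_ind => //; rewrite /Z1 => a b /= -> ->; exact: addr0. Qed.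

Lemma UU_Fb n m (i j : nat) : n <= i%:Z - 1 -> m <= j%:Z - 1 ->
  Fb (n + m) (brUU K i.+1 j.+1).
Proof.
move=> hi hj; rewrite /brUU /bu; split => /=.
  apply: filtZ; apply: filtD; first (apply: filtX; lia).
  apply: filtN; apply: filtZ; apply: filtX; lia.
rewrite scaler0 subr0 scaler0; exact: filt0.
Qed.

Lemma UV_Fb n m (i j : nat) : n <= i%:Z - 1 -> m <= j%:Z - 1 ->
  Fb (n + m) (brUV K i.+1 j) /\ Z1 (brUV K i.+1 j).
Proof.
move=> hi hj; rewrite /brUV /bv /Z1 /=; split; last by rewrite !scaler0 subr0.
split => /=; first by rewrite !scaler0 subr0; exact: filt0.
apply: filtD; first (apply: filtZ; apply: filtX; lia).
apply: filtN; apply: filtZ; apply: filtX; lia.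
Qed.
Lemma termUU n m (x y : bcca K) (i j : nat) : filt_poly n x.1 -> filt_poly m y.1 ->
  Fb (n + m) ((x.1`_i * y.1`_j) *: brUU K i.+1 j.+1).
Proof.
move=> hx hy; case: (ltP (i%:Z - 1) n) => hi.
  by rewrite hx // mul0r scale0r; exact: Fb0.
case: (ltP (j%:Z - 1) m) => hj.
  by rewrite hy // mulr0 scale0r; exact: Fb0.
by apply: FbZ; apply: UU_Fb.
Qed.

Lemma termUV n m (a b : {poly K}) (i j : nat) : filt_poly n a -> filt_poly m b ->
  Fb (n + m) ((a`_i * b`_j) *: brUV K i.+1 j) /\ Z1 ((a`_i * b`_j) *: brUV K i.+1 j).
Proof.
move=> hx hy; case: (ltP (i%:Z - 1) n) => hi.
  by rewrite hx // mul0r scale0r; split; [exact: Fb0 | done].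
case: (ltP (j%:Z - 1) m) => hj.
  by rewrite hy // mulr0 scale0r; split; [exact: Fb0 | done].
have [h1 h2] := @UV_Fb _ _ _ _ hi hj; split; first by apply: FbZ.
by move: h2; rewrite /Z1 /brUV /= => ->; rewrite scaler0.
Qed.

End S.

Theorem proposition5p2 (K : fieldType) (charK : [pchar K] =i pred0) :
  (forall (n m : int) (x y : bcca K),
      FO n x -> FP m y -> FP (n + m) (lie x y))
  /\ (forall (n m : int) (x y : bcca K),
      Fb n x -> Fb m y -> Fb (n + m) (lie x y))
  /\ (forall x : bcca K, Fb (-1) x)
  /\ (forall (n : int) (x : bcca K), Fb (n + 1) x -> Fb n x).
Proof.
split.
  move=> n m x y [hx1 hx2] [hy1 hy2].
  rewrite /lie hx2 hy1 size_poly0 big_ord0 subr0.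
  under eq_bigr do rewrite big_ord0.
  rewrite big1 // add0r.
  split.
    apply: Z1_sum => i; apply: Z1_sum => j; exact: (@termUV K _ _ _ _ i j hx1 hy2).2.
  have : Fb (n+m) (\sum_(i < size x.1) \sum_(j < size y.2) (x.1`_i * y.2`_j) *: brUV K i.+1 j) by apply: Fb_sum => i; apply: Fb_sum => j; exact: (@termUV K _ _ _ _ i j hx1 hy2).1.
  by case.
split.
  move=> n m x y [hx1 hx2] [hy1 hy2]; rewrite /lie.
  apply: FbD; first apply: FbD; last apply: FbN;
    apply: Fb_sum => i; apply: Fb_sum => j.
  - exact: termUU.
  - exact: (@termUV K _ _ _ _ i j hx1 hy2).1.
  - rewrite mulrC addrC; exact: (@termUV K _ _ _ _ j i hy1 hx2).1.
split.
  by move=> x; split=> i hi; exfalso; lia.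
move=> n x [h1 h2]; split; apply: filt_mono h1 || apply: filt_mono h2; lia.
Qed.
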